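(* Let $n\geq 7$ and $3\leq \Delta\leq n-2$ be integers, and let $T$ be a tree with $n$ vertices and maximum degree $\Delta$. (i) If $3\leq\Delta\leq\lfloor\frac{n-1}{2}\rfloor$, then $$SO(T)\geq \Delta\sqrt{\Delta^2+4}+\sqrt{8}\,(n-2\Delta-1)+\sqrt{5}\,\Delta,$$ with equality if and only if $T$ is isomorphic to a tree $T_\Delta$, i.e. a spider with exactly $\Delta$ legs, each leg of length at least $2$. (ii) If $\lfloor\frac{n-1}{2}\rfloor<\Delta\leq n-2$, then $$SO(T)\geq (n-\Delta-1)\sqrt{\Delta^2+4}+(2\Delta-n+1)\sqrt{\Delta^2+1}+\sqrt{5}\,(n-\Delta-1),$$ with equality if and only if $T\cong T_{n,\Delta}$, where $T_{n,\Delta}$ is the tree obtained from the star $K_{1,\Delta}$ (with $\Delta+1$ vertices) by attaching one pendant edge to each of $n-\Delta-1$ of its leaves.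
   Context: All graphs are finite, simple and undirected; $d_G(v)$ denotes the degree of a vertex $v$ in $G$. The Sombor index of a graph $G$ is $SO(G)=\sum_{uv\in E(G)}\sqrt{d_G(u)^2+d_G(v)^2}$. A spider is a tree with at most one vertex of degree greater than two; this vertex is the hub, and a leg is a path from the hub to a leaf; the length of a leg is its number of edges. *)

(* Defs.v *)
From HB Require Import structures.
From mathcomp Require Import all_boot all_order all_algebra.
From mathcomp Require Import reals.
Set Implicit Arguments. Unset Strict Implicit. Unset Printing Implicit Defensive.
Import Order.TTheory GRing.Theory Num.Theory.

Section Graphs.
Variables (T : finType) (e : rel T).

Definition simple_graph : Prop := symmetric e /\ irreflexive e.

Definition deg (x : T) : nat := #|[set y | e x y]|.

Definition maxdeg : nat := \max_(x : T) deg x.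

Definition connected_graph : Prop := forall x y : T, connect e x y.

Definition acyclic : Prop :=
  forall c : seq T, uniq c -> 3 <= size c -> ~~ cycle e c.

Definition is_tree : Prop := simple_graph /\ connected_graph /\ acyclic.

(* Sombor index: sum over edges {x,y} (each unordered edge counted once,
   via the ordering of T given by enum_rank) of sqrt(d(x)^2 + d(y)^2). *)
Definition sombor (R : realType) : R :=
  \sum_(x : T) \sum_(y : T | e x y && (enum_rank x < enum_rank y)%N)
     Num.sqrt (((deg x) ^ 2 + (deg y) ^ 2)%N%:R).

Definition is_spider : Prop := is_tree /\ (#|[set v | 2 < deg v]| <= 1)%N.

Definition leg (h : T) (p : seq T) : bool :=
  [&& path e h p, uniq (h :: p), p != [::] & deg (last h p) == 1%N].

(* T_Delta: a spider with exactly D legs (the hub h has degree D, each edge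
   at the hub starting exactly one leg), each leg of length at least 2 *)
Definition is_T_Delta (D : nat) : Prop :=
  is_spider /\ exists h : T, deg h = D /\ (forall p, leg h p -> (2 <= size p)%N).

End Graphs.

Definition isomorphic (T1 T2 : finType) (e1 : rel T1) (e2 : rel T2) : Prop :=
  exists f : T1 -> T2, bijective f /\ forall x y, e2 (f x) (f y) = e1 x y.

(* T_{n,D} on vertex set 'I_n: vertex 0 is the centre of the star K_{1,D}
   with leaves 1..D; for j = 1..n-D-1 the vertex D+j is a pendant vertex
   attached to the leaf j. *)
Definition TnD_rel (n D : nat) : rel 'I_n := fun i j =>
  [|| (i == 0 :> nat) && (1 <= j <= D)%N,
      (j == 0 :> nat) && (1 <= i <= D)%N,
      (D < j)%N && (i == j - D :> nat)
    | (D < i)%N && (j == i - D :> nat)].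
Arguments TnD_rel n D : clear implicits.

(* Main.v *)
Require Import Defs.
From HB Require Import structures.
From mathcomp Require Import all_boot all_order all_algebra.
From mathcomp Require Import reals.
From mathcomp Require Import zify ring lra.
Set Implicit Arguments. Unset Strict Implicit. Unset Printing Implicit Defensive.
Import Order.TTheory GRing.Theory Num.Theory.

Section Cyc.
Variables (T : finType) (e : rel T).
Hypothesis esym : symmetric e.
Hypothesis eacyc : acyclic e.

Lemma gcl_base y a s1 b :
  path e a s1 -> uniq (a :: s1) -> y \notin a :: s1 -> 
  e y a -> e y b -> a != b -> b \in a :: s1 -> False.
Proof.
move=> pa ua ny1 eya eyb ab bin.
have bs1 : b \in s1 by move: bin; rewrite inE eq_sym (negbTE ab).
  case/splitPr: bs1 pa ua ny1 => A A' pa ua ny1.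
  have Hc : cycle e (y :: a :: rcons A b).
    rewrite /cycle rcons_cons /= eya /= rcons_path.
    move: pa; rewrite cat_path /= => /and3P [pa1 pa2 _]; rewrite rcons_path pa1 pa2 /=.
    by rewrite last_rcons esym.
  have Hu : uniq (y :: a :: rcons A b).
    move: ny1 ua; rewrite /= !inE !mem_cat !inE !mem_rcons !inE !cat_uniq /=.
    rewrite !negb_or.
    rewrite rcons_uniq.
    by case/and4P => -> -> -> _ /and5P [/and3P [-> -> _] -> /andP [-> _] _ _].
  have H3 : 3 <= size (y :: a :: rcons A b) by rewrite /= size_rcons.
  by move: (eacyc Hu H3); rewrite Hc.
Qed.

Lemma gcl (s2 : seq T) : forall y a s1 b,
  path e a s1 -> path e b s2 -> uniq (a :: s1) -> uniq (b :: s2) ->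
  last a s1 = last b s2 -> y \notin a :: s1 -> y \notin b :: s2 ->
  e y a -> e y b -> a != b -> False.
Proof.
elim: s2 => [|b' s2 IH] y a s1 b pa pb ua ub ll ny1 ny2 eya eyb ab.
  apply: (gcl_base pa ua ny1 eya eyb ab).
  by rewrite /= in ll; rewrite -ll mem_last.
case: (boolP (b \in a :: s1)) => bin; first exact: (gcl_base pa ua ny1 eya eyb ab).
move: pb ub ny2 => /= /andP [ebb' pb'] /andP [nb ub'].
rewrite !inE negb_or => /andP [yb ny2'].
apply: (IH b y (a :: s1) b') => //=.
- by rewrite eya pa.
- by rewrite ny1 -/(uniq (a :: s1)) ua.
- by rewrite inE negb_or eq_sym yb.
- by rewrite esym.
- by case/norP: ny2'.
Qed.
End Cyc.

Section Tree.
Variables (T : finType) (e : rel T).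
Hypothesis esym : symmetric e.
Hypothesis eirr : irreflexive e.
Hypothesis econn : connected_graph e.
Hypothesis eacyc : acyclic e.
Variable v : T.

Fixpoint Sk (k : nat) : {set T} :=
  if k is k'.+1 then Sk k' :|: [set y | [exists x in Sk k', e x y]] else [set v].

Lemma Sk_step k x y : x \in Sk k -> e x y -> y \in Sk k.+1.
Proof. by move=> xS exy; rewrite /= in_setU in_set; apply/orP; right; apply/existsP; exists x; rewrite xS. Qed.

Lemma Sk_S k x : x \in Sk k -> x \in Sk k.+1.
Proof. by move=> xS; rewrite /= in_setU xS. Qed.

Lemma Sk_path x p k : x \in Sk k -> path e x p -> last x p \in Sk (k + size p).
Proof.
elim: p x k => [|y p IH] x k /=; first by rewrite addn0.
move=> xS /andP [exy pp]; rewrite addnS -addSn; apply: IH => //; exact: Sk_step xS exy.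
Qed.

Lemma Sk_ex u : exists k, u \in Sk k.
Proof.
case/connectP: (econn v u) => p pp ->; exists (0 + size p); apply: Sk_path => //.
by rewrite /= in_set1.
Qed.

Definition dist u := ex_minn (Sk_ex u).

Lemma distP u : u \in Sk (dist u).
Proof. by rewrite /dist; case: ex_minnP. Qed.

Lemma dist_min u k : u \in Sk k -> dist u <= k.
Proof. by rewrite /dist; case: ex_minnP => m _ H /H. Qed.

Lemma dist_v : dist v = 0.
Proof. by apply/eqP; rewrite -leqn0; apply: dist_min; rewrite /= in_set1. Qed.

Lemma dist0 u : dist u = 0 -> u = v.
Proof. by move=> H; have := distP u; rewrite H /= in_set1 => /eqP. Qed.

Lemma par_ex u : u != v -> exists w, e u w && (dist w < dist u).
Proof.
move=> uv; have := distP u; case Hd: (dist u) => [|k].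
  by move/dist0: Hd => /eqP; rewrite (negbTE uv).
rewrite /= in_setU => /orP [uS|].
  by have := dist_min uS; rewrite Hd ltnn.
rewrite in_set => /existsP [x /andP [xS exu]].
by exists x; rewrite esym exu /= ltnS dist_min.
Qed.

Definition par u := odflt v [pick w | e u w && (dist w < dist u)].

Lemma parP u : u != v -> e u (par u) && (dist (par u) < dist u).
Proof.
move=> uv; rewrite /par; case: pickP => [w //|H].
by case: (par_ex uv) => w; rewrite H.
Qed.

Lemma par_v : par v = v.
Proof. by rewrite /par; case: pickP => [w|//]; rewrite dist_v ltn0 andbF. Qed.

Fixpoint chainf (k : nat) (u : T) : seq T :=
  if k is k'.+1 then (if u == v then [::] else par u :: chainf k' (par u)) else [::].

Lemma chainf_prop k u : dist u <= k ->
  [/\ path e u (chainf k u), last u (chainf k u) = v,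
      (forall w, w \in chainf k u -> dist w < dist u) & uniq (u :: chainf k u)].
Proof.
elim: k u => [|k IH] u /=.
  by rewrite leqn0 => /eqP /dist0 ->.
move=> du; case: eqP => [-> //|/eqP uv].
case/andP: (parP uv) => ep dp.
have [IH1 IH2 IH3 IH4] : [/\ path e (par u) (chainf k (par u)), last (par u) (chainf k (par u)) = v,
      (forall w, w \in chainf k (par u) -> dist w < dist (par u)) & uniq (par u :: chainf k (par u))].
  by apply: IH; lia.
split => //=.
- by rewrite ep IH1.
- by move=> w; rewrite inE => /orP [/eqP -> //|/IH3]; lia.
- move: IH4 => /= /andP [-> ->]; rewrite !andbT inE negb_or; apply/andP; split.
    by apply/eqP => E; move: dp; rewrite -E ltnn.
  by apply/negP => /IH3; lia.
Qed.

Definition chain u := chainf (dist u) u.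

Lemma chainP u : [/\ path e u (chain u), last u (chain u) = v,
      (forall w, w \in chain u -> dist w < dist u) & uniq (u :: chain u)].
Proof. exact: chainf_prop. Qed.

Lemma par_edge_aux x y : e x y -> y != par x -> x != par y -> dist x <= dist y -> False.
Proof.
move=> exy nyx nxy dxy.
have yv : y != v.
  apply/eqP => yv; move: dxy; rewrite yv dist_v leqn0 => /eqP /dist0 xv.
  by move: exy; rewrite xv yv eirr.
have [px lx dx ux] := chainP x.
have [py ly dy uy] := chainP (par y).
case/andP: (parP yv) => eyp dyp.
apply: (gcl esym eacyc px py ux uy _ _ _ _ eyp nxy).
- by rewrite lx ly.
- rewrite inE negb_or; apply/andP; split.
    by apply/eqP => E; move: exy; rewrite E eirr.
  by apply/negP => /dx; lia.
- rewrite inE negb_or; apply/andP; split.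
    by apply/eqP => E; move: dyp; rewrite -E ltnn.
  by apply/negP => /dy; lia.
- by rewrite esym.
Qed.

Lemma par_edge x y : e x y -> y = par x \/ x = par y.
Proof.
move=> exy.
case: (eqVneq y (par x)) => [->|nyx]; first by left.
case: (eqVneq x (par y)) => [->|nxy]; first by right.
exfalso; case: (leqP (dist x) (dist y)) => d.
  exact: (par_edge_aux exy nyx nxy d).
by apply: (par_edge_aux (y := x) (x := y)) => //; [rewrite esym | lia].
Qed.

Lemma par_neq u : u != v -> par u != u.
Proof. by move=> uv; case/andP: (parP uv) => eu _; apply/eqP => E; move: eu; rewrite E eirr. Qed.

Lemma nbr_v_par u : e v u -> par u = v.
Proof.
move=> evu; case: (par_edge evu) => [E|E].
  by move: evu; rewrite E par_v eirr.
by rewrite -E.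
Qed.

Definition Eset := [set xy : T * T | e xy.1 xy.2].

Lemma card_Eset : #|Eset| = (#|T| - 1).*2.
Proof.
set A := [set (u, par u) | u in [set~ v]].
set B := [set (par u, u) | u in [set~ v]].
have EAB : Eset = A :|: B.
  apply/setP => [[x y]]; rewrite !inE /=; apply/idP/idP.
    move=> exy; case: (par_edge exy) => E.
      apply/orP; left; apply/imsetP; exists x => //.
        rewrite !inE; apply/eqP => xv; move: exy; rewrite E xv par_v eirr //.
      by rewrite E.
    apply/orP; right; apply/imsetP; exists y => //.
      rewrite !inE; apply/eqP => yv; move: exy; rewrite E yv par_v eirr //.
    by rewrite E.
  case/orP => /imsetP [u]; rewrite !inE => uv [-> ->] /=; case/andP: (parP uv) => //.
  by rewrite esym.
have dAB : [disjoint A & B].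
  rewrite -setI_eq0; apply/eqP/setP => [[x y]]; rewrite !inE; apply/negP => /andP [].
  case/imsetP => u; rewrite !inE => uv [-> ->].
  case/imsetP => w; rewrite !inE => wv [E1 E2].
  case/andP: (parP uv) => _; case/andP: (parP wv) => _; rewrite -E1 -E2; lia.
have cA : #|A| = #|T| - 1.
  rewrite card_in_imset ?cardsC1 ?subn1 // => x y _ _ [] //.
have cB : #|B| = #|T| - 1.
  rewrite card_in_imset ?cardsC1 ?subn1 // => x y _ _ [] //.
rewrite EAB cardsU; move: dAB; rewrite -setI_eq0 => /eqP ->; rewrite cards0 cA cB; lia.
Qed.

Lemma deg_sum : \sum_(x : T) deg e x = (#|T| - 1).*2.
Proof.
rewrite -card_Eset -sum1dep_card /deg.
rewrite (eq_bigr (fun x => \sum_(y | e x y) 1)); last first.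
  by move=> x _; rewrite sum1dep_card.
by rewrite pair_big_dep /=; apply: eq_bigl => [[x y]].
Qed.

End Tree.
Section N.
Local Open Scope ring_scope.
Variable R : realType.
Definition s2 : R := Num.sqrt 2.
Definition s5 : R := Num.sqrt 5.
Definition cc : R := 3 * s2 - s5.
Definition qq : R := 2 * s2 - s5.
Definition fr (a b : nat) : R := Num.sqrt ((a ^ 2 + b ^ 2)%N%:R).
Definition gg (d : nat) : R := if d == 1%N then s5 - s2 else cc - qq / (d.-1)%:R.

Lemma s2_lo : 141 <= 100 * s2.
Proof.
have h0 := sqrtr_ge0 (2:R).
have h1 : Num.sqrt (2:R) ^+ 2 = 2 by rewrite sqr_sqrtr.
rewrite /s2; nra.
Qed.
Lemma s2_hi : 100 * s2 <= 142.
Proof.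
have h0 := sqrtr_ge0 (2:R).
have h1 : Num.sqrt (2:R) ^+ 2 = 2 by rewrite sqr_sqrtr.
rewrite /s2; nra.
Qed.
Lemma s5_lo : 223 <= 100 * s5.
Proof.
have h0 := sqrtr_ge0 (5:R).
have h1 : Num.sqrt (5:R) ^+ 2 = 5 by rewrite sqr_sqrtr.
rewrite /s5; nra.
Qed.
Lemma s5_hi : 100 * s5 <= 224.
Proof.
have h0 := sqrtr_ge0 (5:R).
have h1 : Num.sqrt (5:R) ^+ 2 = 5 by rewrite sqr_sqrtr.
rewrite /s5; nra.
Qed.

Lemma fr_sq a b : fr a b ^+ 2 = (a ^ 2 + b ^ 2)%N%:R.
Proof. by rewrite /fr sqr_sqrtr // ler0n. Qed.

Lemma fr_ge0 a b : 0 <= fr a b.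
Proof. exact: sqrtr_ge0. Qed.

Lemma frC a b : fr a b = fr b a.
Proof. by rewrite /fr addnC. Qed.

Lemma fr_lb a b (r : R) : 0 <= r -> r ^+ 2 <= (a ^ 2 + b ^ 2)%N%:R -> r <= fr a b.
Proof.
move=> r0 h; have := fr_sq a b; have := fr_ge0 a b; nra.
Qed.

Lemma fr_lt a b b' : (b < b')%N -> fr a b < fr a b'.
Proof.
move=> bb; rewrite /fr ltr_sqrt ?ltr0n; last by lia.
by rewrite ltr_nat ltn_add2l ltn_sqr.
Qed.

Lemma fr12 : fr 1 2 = s5. Proof. by []. Qed.
Lemma fr22 : fr 2 2 = 2 * s2.
Proof.
rewrite /fr /s2 (_ : ((2 ^ 2 + 2 ^ 2)%N%:R : R) = 2 ^+ 2 * 2); last by rewrite -!natrX -natrM.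
by rewrite sqrtrM ?sqrtr_sqr ?ger0_norm // exprn_ge0.
Qed.

Lemma gg1 : gg 1 = s5 - s2. Proof. by []. Qed.
Lemma gg2 : gg 2 = s2. Proof. by rewrite /gg /= /cc /qq divr1; ring. Qed.
Lemma gg_le d : gg d <= cc.
Proof.
rewrite /gg; case: eqP => _.
  have := s2_lo; have := s2_hi; have := s5_lo; have := s5_hi; rewrite /cc; lra.
rewrite lerBlDr lerDl; apply: divr_ge0; last by rewrite ler0n.
have := s2_lo; have := s2_hi; have := s5_lo; have := s5_hi; rewrite /qq; lra.
Qed.

Lemma sq18 a b : (6 <= a + b)%N -> (18 <= a ^ 2 + b ^ 2)%N.
Proof. move=> h. rewrite !expnS !expn0 !muln1. case: (leqP a b) => ab; nia. Qed.

Lemma fr_big a b : (6 <= a + b)%N -> 42 <= 10 * fr a b.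
Proof.
move=> h; rewrite -ler_pdivrMl ?ltr0n //; apply: fr_lb; first lra.
apply: (@le_trans _ _ ((18%N)%:R)); last by rewrite ler_nat sq18.
by rewrite expr2; lra.
Qed.
Lemma fr13 : 3 <= fr 1 3. Proof. by apply: fr_lb; [lra | rewrite expr2; lra]. Qed.
Lemma fr14 : 4 <= fr 1 4. Proof. by apply: fr_lb; [lra | rewrite expr2; lra]. Qed.
Lemma fr23 : 36 <= 10 * fr 2 3.
Proof. by rewrite -ler_pdivrMl ?ltr0n //; apply: fr_lb; [lra | rewrite expr2; lra]. Qed.

Lemma edge_ineq a b : (1 <= a)%N -> (1 <= b)%N -> (3 <= a + b)%N -> gg a + gg b <= fr a b.
Proof.
wlog ab : a b / (a <= b)%N.
  move=> H a1 b1 s; case: (leqP a b) => h; first exact: H.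
  by rewrite addrC frC; apply: H => //; [lia | rewrite addnC].
move=> a1 b1 s.
have ha := gg_le a; have hb := gg_le b.
have l2 := s2_lo; have h2 := s2_hi; have l5 := s5_lo; have h5 := s5_hi.
rewrite /cc in ha hb.
case: (leqP 6 (a + b)) => h6.
  have := fr_big h6; lra.
have : (a == 1%N) && ((b == 2%N) || (b == 3%N) || (b == 4%N)) || (a == 2%N) && ((b == 2%N) || (b == 3%N)) by lia.
case/orP => /andP [/eqP -> H]; move: H.
  case/orP => [/orP [] | ] /eqP ->.
  - by rewrite gg1 gg2 fr12; lra.
  - by have := gg_le 3; rewrite gg1 /cc; have := fr13; lra.
  - by have := gg_le 4; rewrite gg1 /cc; have := fr14; lra.
case/orP => /eqP ->.
  by rewrite gg2 fr22; lra.
by have := gg_le 3; rewrite gg2 /cc; have := fr23; lra.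
Qed.

Lemma edge_eq a b : (1 <= a <= 2)%N -> (1 <= b <= 2)%N -> (3 <= a + b)%N -> gg a + gg b = fr a b.
Proof.
move=> ha hb s.
have : ((a == 1%N) && (b == 2%N)) || ((a == 2%N) && (b == 1%N)) || ((a == 2%N) && (b == 2%N)) by lia.
case/orP => [/orP [] | ] /andP [/eqP -> /eqP ->].
- by rewrite gg1 gg2 fr12; ring.
- by rewrite gg1 gg2 frC fr12; ring.
- by rewrite gg2 fr22; ring.
Qed.

Definition kk : R := 2 * qq.
Definition beta (D : nat) : R := fr D 2 - s2.
Definition delta (D : nat) : R := fr D 1 - fr D 2 + 2 * s2 - s5.
Definition tadj (D d : nat) : R := (fr D d - beta D) + (d.-1)%:R * gg d - (cc * d%:R - kk).
Definition tnon (d : nat) : R := d%:R * gg d - (cc * d%:R - kk).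

Lemma tadj1 D : tadj D 1 = delta D.
Proof. by rewrite /tadj /= mul0r /delta /beta /cc /kk /qq; ring. Qed.
Lemma tadj2 D : tadj D 2 = 0.
Proof. by rewrite /tadj /= mul1r gg2 /beta /cc /kk /qq; ring. Qed.

Lemma ggM d : (2 <= d)%N -> (d.-1)%:R * gg d = (d.-1)%:R * cc - qq.
Proof.
move=> d2; rewrite /gg; have -> : (d == 1%N) = false by lia.
have m0 : (d.-1)%:R != 0 :> R by rewrite pnatr_eq0; lia.
by rewrite mulrBr mulrCA divff // mulr1.
Qed.

Lemma tadj_gt D d : (3 <= d)%N -> 0 < tadj D d.
Proof.
move=> d3; rewrite /tadj ggM; last by lia.
have -> : d%:R = (d.-1)%:R + 1 :> R by rewrite natr1 prednK //; lia.
have := fr_lt D (isT : (2 < 3)%N); have := @fr_lt D 2 d d3.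
rewrite /beta /kk /cc /qq; lra.
Qed.

Lemma tnon12 d : (1 <= d <= 2)%N -> tnon d = 0.
Proof.
move=> h; have : (d == 1%N) || (d == 2%N) by lia.
case/orP => /eqP ->; rewrite /tnon ?gg1 ?gg2 /cc /kk /qq; ring.
Qed.

Lemma tnon_gt d : (3 <= d)%N -> 0 < tnon d.
Proof.
move=> d3; rewrite /tnon /gg.
have -> : (d == 1%N) = false by lia.
have -> : d%:R = (d.-1)%:R + 1 :> R by rewrite natr1 prednK //; lia.
have m2 : 2 <= (d.-1)%:R :> R by rewrite ler_nat; lia.
have m0 : (d.-1)%:R != 0 :> R by rewrite pnatr_eq0; lia.
have hq : 0 < qq by have := s2_lo; have := s2_hi; have := s5_lo; have := s5_hi; rewrite /qq; lra.
set m := (d.-1)%:R in m2 m0 *.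
have hx : 0 < qq / m by apply: divr_gt0 => //; lra.
have hxm : qq / m * m = qq by rewrite divfK.
set x := qq / m in hx hxm *.
rewrite /kk; nra.
Qed.

Lemma delta_gt D : (3 <= D)%N -> 0 < delta D.
Proof.
move=> D3.
have h1 := fr_sq D 1; have h2 := fr_sq D 2.
have g1 := fr_ge0 D 1; have g2 := fr_ge0 D 2.
have hD : (3%N)%:R <= D%:R :> R by rewrite ler_nat.
have l1 : D%:R <= fr D 1 by apply: fr_lb; [exact: ler0n | rewrite -natrX ler_nat; lia].
have l2 : D%:R <= fr D 2 by apply: fr_lb; [exact: ler0n | rewrite -natrX ler_nat; lia].
have e3 : fr D 2 ^+ 2 - fr D 1 ^+ 2 = 3.
  rewrite h1 h2 -natrB; last lia.
  by rewrite (_ : (_ - _)%N = 3%N) //; lia.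
have := s2_lo; have := s2_hi; have := s5_lo; have := s5_hi.
rewrite /delta; nra.
Qed.
End N.
Arguments s2 {R}. Arguments s5 {R}. Arguments cc {R}. Arguments qq {R}. Arguments kk {R}.
Arguments fr {R}. Arguments gg {R}. Arguments beta {R}. Arguments delta {R}.
Arguments tadj {R}. Arguments tnon {R}.

Section Sym.
Variables (R : realType) (T : finType) (e : rel T).
Hypothesis esym : symmetric e.
Hypothesis eirr : irreflexive e.
Local Open Scope ring_scope.

Lemma swap_sum (F : T -> T -> R) :
  \sum_x \sum_(y | e x y) F y x = \sum_x \sum_(y | e x y) F x y.
Proof.
rewrite (exchange_big_dep predT) //=; apply: eq_bigr => y _.
by apply: eq_bigl => x; rewrite esym.
Qed.

Lemma sym_sum (F : T -> T -> R) : (forall x y, F x y = F y x) ->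
  \sum_x \sum_(y | e x y) F x y =
  2 * \sum_x \sum_(y | e x y && (enum_rank x < enum_rank y)%N) F x y.
Proof.
move=> FC.
rewrite (eq_bigr (fun x => \sum_(y | e x y && (enum_rank x < enum_rank y)%N) F x y
            + \sum_(y | e x y && (enum_rank y < enum_rank x)%N) F x y)); last first.
  move=> x _; rewrite (bigID (fun y => (enum_rank x < enum_rank y)%N)) /=; congr (_ + _).
  apply: eq_bigl => y; case exy: (e x y) => //=.
  have xy : x != y by apply/eqP => E; move: exy; rewrite E eirr.
  rewrite -leqNgt leq_eqVlt; case: eqP => //= E.
  by move: xy; rewrite (enum_rank_inj (val_inj E)) eqxx.
rewrite big_split /=.
set A := \sum_x \sum_(y | e x y && (enum_rank x < enum_rank y)%N) F x y.
have -> : \sum_x \sum_(y | e x y && (enum_rank y < enum_rank x)%N) F x y = A.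
  rewrite (exchange_big_dep predT) //=; apply: eq_bigr => y _.
  by apply: eq_big => [x|x _]; [rewrite /= esym | rewrite FC].
ring.
Qed.
End Sym.

Section Main.
Variables (R : realType) (T : finType) (e : rel T).
Hypothesis esym : symmetric e.
Hypothesis eirr : irreflexive e.
Hypothesis econn : connected_graph e.
Hypothesis eacyc : acyclic e.
Variables (v : T) (D : nat).
Hypothesis degv : deg e v = D.
Hypothesis D3 : (3 <= D)%N.

Local Notation dg := (deg e).
Local Notation p := (par econn v).

Lemma deg_pos u : u != v -> (1 <= dg u)%N.
Proof.
move=> uv; apply/card_gt0P; exists (p u); rewrite inE.
by case/andP: (parP esym econn uv).
Qed.

Lemma leaf_nbr x y z : dg x = 1%N -> e x y -> e x z -> z = y.
Proof.
move/eqP/cards1P => [w Hw] exy exz.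
have : y \in [set y | e x y] by rewrite inE.
have : z \in [set y | e x y] by rewrite inE.
by rewrite Hw !inE => /eqP -> /eqP ->.
Qed.

Lemma not_both_leaves x y : e x y -> x != v -> y != v -> (3 <= dg x + dg y)%N.
Proof.
move=> exy xv yv.
have hx := deg_pos xv; have hy := deg_pos yv.
case: (leqP 3 (dg x + dg y)) => // h.
have dx : dg x = 1%N by lia.
have dy : dg y = 1%N by lia.
have cl : closed e [pred z | (z == x) || (z == y)].
  move=> z z' ezz'; rewrite !inE.
  have ezz'' : e z' z by rewrite esym.
  case: (eqVneq z x) => [zx|zx].
    by subst z; rewrite (leaf_nbr dx exy ezz') eqxx orbT.
  case: (eqVneq z y) => [zy|zy].
    by subst z; rewrite (leaf_nbr dy (y:=x) _ ezz') ?eqxx // esym.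
  case: (eqVneq z' x) => [zx'|zx'].
    by subst z'; move: zy; rewrite (leaf_nbr dx exy ezz'') eqxx.
  case: (eqVneq z' y) => [zy'|zy'] //.
  by subst z'; move: zx; rewrite (leaf_nbr dy (y:=x) _ ezz'') ?eqxx // esym.
have := closed_connect cl (econn x v); rewrite !inE eqxx /= => H; move: (Logic.eq_sym H) => /orP [] /eqP E.
- by move: xv; rewrite E eqxx.
- by move: yv; rewrite E eqxx.
Qed.

Lemma sum_deg_nv : (\sum_(u | u != v) dg u = (#|T| - 1).*2 - D)%N.
Proof.
have := deg_sum esym eirr econn eacyc v; rewrite (bigD1 v) //= degv.
by move=> <-; rewrite addKn.
Qed.

Local Open Scope ring_scope.

Lemma sum_const_pred (P : pred T) (c : R) : \sum_(y | P y) c = (#|[set y | P y]|)%:R * c.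
Proof.
by rewrite -sum1dep_card natr_sum mulr_suml; apply: eq_bigr => y _; rewrite mul1r.
Qed.

Definition phi x y : R := if x == v then beta D else if y == v then fr D (dg x) - beta D else gg (dg x).
Definition Phi x : R := \sum_(y | e x y) phi x y.
Definition tv x : R := Phi x - (cc * (dg x)%:R - kk).
Definition sl x y : R := fr (dg x) (dg y) - phi x y - phi y x.

Lemma SO_eq : sombor e R = \sum_x Phi x + (\sum_x \sum_(y | e x y) sl x y) / 2.
Proof.
have H := @sym_sum R T e esym eirr (fun x y => @fr R (dg x) (dg y)) (fun x y => frC _ _ _).
have H2 : \sum_x \sum_(y | e x y) @fr R (dg x) (dg y) = 2 * \sum_x Phi x + \sum_x \sum_(y | e x y) sl x y.
  rewrite (eq_bigr (fun x => \sum_(y | e x y) phi x y + \sum_(y | e x y) phi y x + \sum_(y | e x y) sl x y)); last first.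
    by move=> x _; rewrite -!big_split /=; apply: eq_bigr => y _; rewrite /sl; ring.
  rewrite !big_split /= (swap_sum esym (fun x y => phi x y)) /Phi; ring.
rewrite /sombor -/(fr _ _).
have -> : \sum_x \sum_(y | e x y && (enum_rank x < enum_rank y)%N) Num.sqrt ((dg x ^ 2 + dg y ^ 2)%N%:R) = 
  \sum_x \sum_(y | e x y && (enum_rank x < enum_rank y)%N) @fr R (dg x) (dg y) by [].
have -> : \sum_x \sum_(y | e x y && (enum_rank x < enum_rank y)%N) @fr R (dg x) (dg y) =
   (\sum_x \sum_(y | e x y) @fr R (dg x) (dg y)) / 2.
  have H' : \sum_x \sum_(y | e x y) @fr R (dg x) (dg y) =
    2 * \sum_x \sum_(y | e x y && (enum_rank x < enum_rank y)%N) @fr R (dg x) (dg y) := H.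
  by rewrite H'; field.
by rewrite H2; field.
Qed.

Lemma Phi_v : Phi v = D%:R * beta D.
Proof.
rewrite /Phi (eq_bigr (fun _ => beta D)); last by move=> y _; rewrite /phi eqxx.
by rewrite sum_const_pred -degv.
Qed.

Lemma Phi_non u : u != v -> ~~ e v u -> Phi u = (dg u)%:R * gg (dg u).
Proof.
move=> uv nvu; rewrite /Phi (eq_bigr (fun _ => gg (dg u))); first by rewrite sum_const_pred.
move=> y euy; rewrite /phi (negbTE uv); case: eqP => // yv.
by move: nvu; rewrite -yv esym euy.
Qed.

Lemma Phi_adj u : u != v -> e v u -> Phi u = (fr D (dg u) - beta D) + ((dg u).-1)%:R * gg (dg u).
Proof.
move=> uv evu; rewrite /Phi (bigD1 v) /=; last by rewrite esym.
rewrite {1}/phi (negbTE uv) eqxx; congr (_ + _).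
rewrite (eq_bigr (fun _ => gg (dg u))); last first.
  by move=> y /andP [_ yv]; rewrite /phi (negbTE uv) (negbTE yv).
rewrite sum_const_pred; congr (_%:R * _).
have : dg u = ((v \in [set y | e u y]) + #|[set y | e u y] :\ v|)%N by rewrite -cardsD1.
rewrite inE esym evu /= add1n => ->; rewrite succnK.
by apply: eq_card => y; rewrite !inE andbC.
Qed.

Lemma tv_non u : u != v -> ~~ e v u -> tv u = tnon (dg u).
Proof. by move=> uv nvu; rewrite /tv Phi_non. Qed.

Lemma tv_adj u : u != v -> e v u -> tv u = tadj D (dg u).
Proof. by move=> uv evu; rewrite /tv Phi_adj. Qed.

Lemma sl_v y : y != v -> sl v y = 0.
Proof. by move=> yv; rewrite /sl /phi eqxx (negbTE yv) degv; ring. Qed.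

Lemma sl_v' x : x != v -> sl x v = 0.
Proof. by move=> xv; rewrite /sl /phi eqxx (negbTE xv) degv frC; ring. Qed.

Lemma sl_nv x y : x != v -> y != v -> sl x y = fr (dg x) (dg y) - gg (dg x) - gg (dg y).
Proof. by move=> xv yv; rewrite /sl /phi (negbTE xv) (negbTE yv). Qed.

Lemma edge_neq x y : e x y -> x != y.
Proof. by move=> exy; apply/eqP => E; move: exy; rewrite E eirr. Qed.

Lemma sl_ge0 x y : e x y -> 0 <= sl x y.
Proof.
move=> exy; case: (eqVneq x v) => [xv|xv].
  by rewrite xv sl_v // -xv eq_sym edge_neq.
case: (eqVneq y v) => [->|yv]; first by rewrite sl_v'.
rewrite sl_nv //.
have := edge_ineq R (deg_pos xv) (deg_pos yv) (not_both_leaves exy xv yv); lra.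
Qed.

Lemma sl_eq0 x y : e x y -> (dg x <= 2)%N -> (dg y <= 2)%N -> sl x y = 0.
Proof.
move=> exy hx hy; case: (eqVneq x v) => [xv|xv].
  by rewrite xv sl_v // -xv eq_sym edge_neq.
case: (eqVneq y v) => [->|yv]; first by rewrite sl_v'.
rewrite sl_nv // -(edge_eq R _ _ (not_both_leaves exy xv yv)).
- by ring.
- by rewrite deg_pos.
- by rewrite deg_pos.
Qed.

Definition ell := #|[set u | e v u && (dg u == 1%N)]|.
Definition tp u : R := tv u - (if e v u && (dg u == 1%N) then delta D else 0).
Definition Xs : R := \sum_(u | u != v) tp u + (\sum_x \sum_(y | e x y) sl x y) / 2.
Definition bnd1 : R := D%:R * beta D + cc * (((#|T| - 1).*2 - D)%N)%:R - kk * (#|T| - 1)%:R.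

Lemma SO_dec : sombor e R = bnd1 + Xs + delta D * ell%:R.
Proof.
rewrite SO_eq (bigD1 v) //= Phi_v.
have -> : \sum_(u | u != v) Phi u = \sum_(u | u != v) (cc * (dg u)%:R - kk + tp u
     + (if e v u && (dg u == 1%N) then delta D else 0)).
  by apply: eq_bigr => u _; rewrite /tp /tv; ring.
rewrite big_split /= big_split /= sumrB -mulr_sumr -natr_sum sum_deg_nv.
rewrite (sum_const_pred (fun u => u != v)).
rewrite -big_mkcondr /= (sum_const_pred (fun u => (u != v) && (e v u && (dg u == 1%N)))).
have -> : #|[set u | u != v]| = (#|T| - 1)%N.
  by rewrite (_ : [set u | u != v] = [set~ v]) ?cardsC1 ?subn1 //; apply/setP => u; rewrite !inE.
have -> : #|[set u | (u != v) && (e v u && (dg u == 1%N))]| = ell.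
  apply: eq_card => u; rewrite !inE; case evu: (e v u) => /=; last by rewrite andbF.
  by rewrite eq_sym edge_neq.
rewrite /Xs /bnd1; ring.
Qed.

Lemma tp_ge0 u : u != v -> 0 <= tp u.
Proof.
move=> uv; have d1 := deg_pos uv; rewrite /tp.
case evu: (e v u) => /=.
  rewrite tv_adj //.
  case: (eqVneq (dg u) 1%N) => [->|n1]; first by rewrite tadj1 subrr.
  case: (eqVneq (dg u) 2%N) => [->|n2]; first by rewrite tadj2 subr0.
  by rewrite subr0; apply/ltW/tadj_gt; lia.
rewrite subr0 tv_non ?evu //.
case: (leqP 3 (dg u)) => h; first exact/ltW/tnon_gt.
by rewrite tnon12 //; lia.
Qed.

Lemma tp_eq0 u : u != v -> (tp u == 0) = (dg u <= 2)%N.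
Proof.
move=> uv; have d1 := deg_pos uv; rewrite /tp.
case evu: (e v u) => /=.
  rewrite tv_adj //.
  case: (eqVneq (dg u) 1%N) => [->|n1]; first by rewrite tadj1 subrr eqxx.
  case: (eqVneq (dg u) 2%N) => [->|n2]; first by rewrite tadj2 subr0 eqxx.
  by rewrite subr0 gt_eqF; [lia | apply/tadj_gt; lia].
rewrite subr0 tv_non ?evu //.
case: (leqP 3 (dg u)) => h; first by rewrite gt_eqF ?tnon_gt //; lia.
by rewrite tnon12 ?eqxx //; lia.
Qed.

Lemma sum_ind (P : pred T) : (\sum_(u | u != v) (P u : nat) = #|[set u | (u != v) && P u]|)%N.
Proof.
rewrite -sum1dep_card big_mkcondr /=.
by apply: eq_bigr => u _; case: (P u).
Qed.

Lemma card_adj : #|[set u | (u != v) && e v u]| = D.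
Proof.
rewrite -degv /deg; apply: eq_card => u; rewrite !inE.
by case evu: (e v u); rewrite ?andbF //= eq_sym edge_neq.
Qed.

Lemma card_leaf : #|[set u | (u != v) && (e v u && (dg u == 1%N))]| = ell.
Proof.
apply: eq_card => u; rewrite !inE.
by case evu: (e v u); rewrite ?andbF //= eq_sym edge_neq.
Qed.

Lemma card_nv : #|[set u | u != v]| = (#|T| - 1)%N.
Proof. by rewrite (_ : [set u | u != v] = [set~ v]) ?cardsC1 ?subn1 //; apply/setP => u; rewrite !inE. Qed.

Lemma D_le : (D <= #|T| - 1)%N.
Proof.
rewrite -card_adj -card_nv; apply: subset_leq_card; apply/subsetP => u; rewrite !inE.
by case/andP.
Qed.

Lemma ell_lb : (D.*2 + 1 - #|T| <= ell)%N.
Proof.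
have H : (\sum_(u | u != v) (1 + (e v u : nat)) <= \sum_(u | u != v) (dg u + (e v u && (dg u == 1%N) : nat)))%N.
  apply: leq_sum => u uv; have := deg_pos uv.
  by case: (e v u); case: (dg u) => [|[|k]] //=.
move: H; rewrite !big_split /= !(sum_ind (fun u => e v u)) !(sum_ind (fun u => e v u && (dg u == 1%N))).
rewrite card_adj card_leaf sum_deg_nv sum1dep_card.
rewrite (_ : #|[set u | u != v]| = (#|T| - 1)%N); last first.
  by rewrite (_ : [set u | u != v] = [set~ v]) ?cardsC1 ?subn1 //; apply/setP => u; rewrite !inE.
have : (0 < #|T|)%N by apply/card_gt0P; exists v.
have := D_le; rewrite -!mul2n. set n := #|T|. lia.
Qed.

Lemma ell_exact : (forall u, u != v -> (dg u <= 2)%N) -> (forall u, u != v -> ~~ e v u -> dg u = 1%N) ->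
  ell = (D.*2 + 1 - #|T|)%N.
Proof.
move=> H2 H1; have Dn := D_le.
have H : (\sum_(u | u != v) (1 + (e v u : nat)) = \sum_(u | u != v) (dg u + (e v u && (dg u == 1%N) : nat)))%N.
  apply: eq_bigr => u uv; have := deg_pos uv; have := H2 _ uv.
  case evu: (e v u) => /=; last by rewrite (H1 _ uv) ?evu.
  by case: (dg u) => [|[|[|k]]].
move: H; rewrite !big_split /= !(sum_ind (fun u => e v u)) !(sum_ind (fun u => e v u && (dg u == 1%N))).
rewrite card_adj card_leaf sum_deg_nv sum1dep_card.
rewrite (_ : #|[set u | u != v]| = (#|T| - 1)%N); last first.
  by rewrite (_ : [set u | u != v] = [set~ v]) ?cardsC1 ?subn1 //; apply/setP => u; rewrite !inE.
have : (0 < #|T|)%N by apply/card_gt0P; exists v.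
rewrite -!mul2n; set n := #|T|; lia.
Qed.

Lemma ssl_ge0 : 0 <= \sum_x \sum_(y | e x y) sl x y.
Proof. by apply: sumr_ge0 => x _; apply: sumr_ge0 => y; apply: sl_ge0. Qed.

Lemma stp_ge0 : 0 <= \sum_(u | u != v) tp u.
Proof. by apply: sumr_ge0 => u; apply: tp_ge0. Qed.

Lemma Xs_ge0 : 0 <= Xs.
Proof. have := ssl_ge0; have := stp_ge0; rewrite /Xs; lra. Qed.

Lemma Xs_eq0 : (Xs = 0) <-> (forall u, u != v -> (dg u <= 2)%N).
Proof.
split.
  move=> X0 u uv; have h1 := ssl_ge0; have h2 := stp_ge0.
  have S0 : \sum_(u | u != v) tp u = 0 by move: X0; rewrite /Xs; lra.
  by rewrite -tp_eq0 // (psumr_eq0P (fun u => @tp_ge0 u) S0).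
move=> H; rewrite /Xs.
rewrite (eq_bigr (fun _ => 0)); last by move=> u uv; apply/eqP; rewrite tp_eq0 // H.
rewrite big1 // add0r.
rewrite (eq_bigr (fun _ => 0)); first by rewrite big1 // mul0r.
move=> x _; apply: big1 => y exy.
case: (eqVneq x v) => [xv|xv].
  by rewrite xv sl_v // -xv eq_sym edge_neq.
case: (eqVneq y v) => [->|yv]; first by rewrite sl_v'.
by apply: sl_eq0 => //; apply: H.
Qed.

Lemma TD_iff : is_tree e -> (is_T_Delta e D <-> (forall u, u != v -> (dg u <= 2)%N) /\ ell = 0%N).
Proof.
move=> tr; split.
  case=> [[_ sp] [h [dh lg]]].
  have hv : h = v.
    move/card_le1_eqP: sp; apply; rewrite inE; lia.
  subst h; split.
    move=> u uv; case: (leqP (dg u) 2) => // d3.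
    by move: uv; rewrite (card_le1_eqP sp u v) ?eqxx // inE; lia.
  apply/eqP; rewrite cards_eq0; apply/eqP/setP => u; rewrite !inE.
  apply/negbTE/negP => /andP [evu /eqP du].
  have : leg e v [:: u].
    by rewrite /leg /= evu du inE eqxx edge_neq.
  by move/lg.
case=> H2 l0; split; first split => //.
  apply: (@leq_trans #|[set v]|); last by rewrite cards1.
  apply: subset_leq_card.
  apply/subsetP => u; rewrite !inE; case: (eqVneq u v) => // uv.
  by have := H2 _ uv; lia.
exists v; split => // pp.
case/and4P => pv uv pn dl.
case: pp pv uv pn dl => [|u [|w pp]] //= pv uv _ dl.
exfalso; move: l0 => /eqP; rewrite cards_eq0 => /eqP /setP /(_ u).
by rewrite !inE dl; move: pv; rewrite andbT => ->.
Qed.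

Lemma card_vals n (A : {set 'I_n}) (s : seq nat) : (forall j, j \in A -> (j : nat) \in s) -> (#|A| <= size s)%N.
Proof.
move=> H; rewrite cardE -(size_map (@nat_of_ord n)); apply: uniq_leq_size.
  by rewrite map_inj_uniq ?enum_uniq //; apply: ord_inj.
by move=> x /mapP [j]; rewrite mem_enum => /H jA ->.
Qed.

Lemma tnd_deg2 n (i : 'I_n) : (n <= D.*2)%N -> (i : nat) != 0%N -> (#|[set j | TnD_rel n D i j]| <= 2)%N.
Proof.
move=> nD i0; rewrite -mul2n in nD; case: (leqP ((i : nat)) D) => iD.
  apply: (@card_vals _ _ [:: 0%N; ((i : nat) + D)%N]) => j; rewrite !inE /TnD_rel.
  by have := ltn_ord j; have := ltn_ord i; move: i0; lia.
apply: (@leq_trans 1); last by [].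
apply: (@card_vals _ _ [:: ((i : nat) - D)%N]) => j; rewrite !inE /TnD_rel.
by have := ltn_ord j; have := ltn_ord i; move: i0; lia.
Qed.

Lemma tnd_deg1 n (i : 'I_n) : (n <= D.*2)%N -> (D < (i : nat))%N -> (#|[set j | TnD_rel n D i j]| <= 1)%N.
Proof.
move=> nD iD; rewrite -mul2n in nD.
apply: (@card_vals _ _ [:: ((i : nat) - D)%N]) => j; rewrite !inE /TnD_rel.
by have := ltn_ord j; have := ltn_ord i; lia.
Qed.

Lemma iso_cond : (#|T| <= D.*2)%N -> isomorphic e (TnD_rel #|T| D) ->
  (forall u, u != v -> (dg u <= 2)%N) /\ ell = (D.*2 + 1 - #|T|)%N.
Proof.
move=> nD [f [fbij frel]].
have finj := bij_inj fbij.
case: fbij => g fg gf.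
have degf x : dg x = #|[set j | TnD_rel #|T| D (f x) j]|.
  rewrite /deg -(card_imset _ finj); apply: eq_card => j; rewrite inE.
  apply/imsetP/idP => [[y]|H].
    by rewrite inE => exy ->; rewrite frel.
  by exists (g j); [rewrite inE -frel gf | rewrite gf].
have fv0 : (f v : nat) = 0%N.
  apply/eqP; apply: contraT => fv.
  by have := tnd_deg2 nD fv; rewrite -degf degv; lia.
have fu0 u : u != v -> (f u : nat) != 0%N.
  move=> uv; apply/eqP => fu; move: uv; rewrite -(inj_eq finj) => /eqP; apply.
  by apply: ord_inj; rewrite fu fv0.
have H2 u : u != v -> (dg u <= 2)%N.
  by move=> uv; rewrite degf; apply: tnd_deg2 => //; apply: fu0.
split => //; apply: ell_exact => // u uv nvu.
have := deg_pos uv; suff : (dg u <= 1)%N by lia.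
rewrite degf; apply: tnd_deg1 => //.
move: nvu; rewrite -frel /TnD_rel fv0 /=.
have aux : forall k : nat, k != 0%N -> ~~ [|| (0 < k <= D)%N, (k == 0%N) && false, (D < k)%N && (0%N == (k - D)%N) | false] -> (D < k)%N by move=> k; lia.
exact: aux (fu0 _ uv).
Qed.

Section Iso.
Hypothesis nD : (#|T| <= D.*2)%N.
Hypothesis H2 : forall u, u != v -> (dg u <= 2)%N.
Hypothesis Hl : ell = (D.*2 + 1 - #|T|)%N.

Let M := [set u | e v u && (dg u == 2%N)].
Let L := [set u | e v u && (dg u == 1%N)].
Let W := [set u | (u != v) && ~~ e v u].

Lemma nbr12 u : e v u -> (dg u == 1%N) || (dg u == 2%N).
Proof.
move=> evu; have uv : u != v by rewrite eq_sym edge_neq.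
by have := deg_pos uv; have := H2 uv; lia.
Qed.

Lemma inM u : u \in M = e v u && (dg u == 2%N). Proof. by rewrite inE. Qed.
Lemma inL u : u \in L = e v u && (dg u == 1%N). Proof. by rewrite inE. Qed.
Lemma inW u : u \in W = (u != v) && ~~ e v u. Proof. by rewrite inE. Qed.

Lemma cL : #|L| = (D.*2 + 1 - #|T|)%N.
Proof. by rewrite -Hl. Qed.

Lemma cML : (#|M| + #|L| = D)%N.
Proof.
rewrite -cardsUI.
have -> : M :&: L = set0.
  by apply/setP => u; rewrite !inE; case: (e v u); case: (dg u) => [|[|[|k]]].
have -> : M :|: L = [set u | e v u].
  apply/setP => u; rewrite !inE; case evu: (e v u) => //=.
  by rewrite orbC; apply: nbr12.
by rewrite cards0 addn0 -degv.
Qed.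

Lemma cW : #|W| = (#|T| - 1 - D)%N.
Proof.
have := cardsID [set u | e v u] [set u | u != v].
rewrite card_nv.
have -> : [set u | u != v] :&: [set u | e v u] = [set u | (u != v) && e v u].
  by apply/setP => u; rewrite !inE.
have -> : [set u | u != v] :\: [set u | e v u] = W.
  by apply/setP => u; rewrite !inE andbC.
by rewrite card_adj => <-; rewrite addKn.
Qed.

Definition child u := odflt v [pick w | e u w && (w != v)].

Lemma childP u : u \in M -> e u (child u) && (child u != v).
Proof.
rewrite inM => /andP [evu du]; rewrite /child; case: pickP => [w //|H].
have : (dg u <= 1)%N.
  rewrite /deg; apply: (@leq_trans #|[set v]|); last by rewrite cards1.
  apply: subset_leq_card; apply/subsetP => w; rewrite !inE => euw; have := H w; rewrite euw /=.
  by move/negbT; rewrite negbK.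
by move/eqP: du => ->.
Qed.

Lemma par_child u : u \in M -> p (child u) = u.
Proof.
move=> uM; case/andP: (childP uM) => euc cv.
move: uM; rewrite inM => /andP [evu _].
case: (par_edge esym eirr econn eacyc v euc) => // E.
by move: cv; rewrite E (nbr_v_par esym eirr econn eacyc evu) eqxx.
Qed.

Lemma child_W u : u \in M -> child u \in W.
Proof.
move=> uM; case/andP: (childP uM) => euc cv.
rewrite inW cv /=; apply/negP => evc.
have := nbr_v_par esym eirr econn eacyc evc; rewrite par_child // => uv.
by move: uM; rewrite inM uv eirr.
Qed.

Lemma imW : [set child u | u in M] = W.
Proof.
apply/eqP; rewrite eqEcard; apply/andP; split.
  by apply/subsetP => w /imsetP [u uM ->]; apply: child_W.
rewrite card_in_imset; last first.
  by move=> x y xM yM E; rewrite -(par_child xM) -(par_child yM) E.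
rewrite cW; have := cML; have := cL; have := D_le; rewrite -!mul2n; set n := #|T|; lia.
Qed.

Lemma Wpar w : w \in W -> p w \in M /\ child (p w) = w.
Proof.
rewrite -imW => /imsetP [u uM ->]; by rewrite par_child.
Qed.

Lemma cls4 x : [\/ x = v, x \in M, x \in L | x \in W].
Proof.
case: (eqVneq x v) => [->|xv]; first by constructor 1.
case evx: (e v x).
  by case/orP: (nbr12 evx) => dx; [constructor 3; rewrite inL evx | constructor 2; rewrite inM evx].
by constructor 4; rewrite inW xv evx.
Qed.

Definition fn x : nat :=
  if x == v then 0%N else if x \in M then (index x (enum M)).+1
  else if x \in L then (#|M| + index x (enum L)).+1 else (D + index (p x) (enum M)).+1.

Lemma idxM x : x \in M -> (index x (enum M) < #|M|)%N.
Proof. by move=> xM; rewrite cardE index_mem mem_enum. Qed.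
Lemma idxL x : x \in L -> (index x (enum L) < #|L|)%N.
Proof. by move=> xL; rewrite cardE index_mem mem_enum. Qed.

Lemma M_nv x : x \in M -> x != v.
Proof. by rewrite inM => /andP [evx _]; rewrite eq_sym edge_neq. Qed.
Lemma L_nv x : x \in L -> x != v.
Proof. by rewrite inL => /andP [evx _]; rewrite eq_sym edge_neq. Qed.
Lemma L_nM x : x \in L -> x \notin M.
Proof. by rewrite inL inM => /andP [_ /eqP ->]; rewrite andbF. Qed.
Lemma W_nv x : x \in W -> x != v.
Proof. by rewrite inW => /andP []. Qed.
Lemma W_nM x : x \in W -> x \notin M.
Proof. by rewrite inW inM => /andP [_ /negbTE ->]. Qed.
Lemma W_nL x : x \in W -> x \notin L.
Proof. by rewrite inW inL => /andP [_ /negbTE ->]. Qed.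

Lemma fn_v : fn v = 0%N. Proof. by rewrite /fn eqxx. Qed.
Lemma fn_M x : x \in M -> fn x = (index x (enum M)).+1.
Proof. by move=> xM; rewrite /fn (negbTE (M_nv xM)) xM. Qed.
Lemma fn_L x : x \in L -> fn x = (#|M| + index x (enum L)).+1.
Proof. by move=> xL; rewrite /fn (negbTE (L_nv xL)) (negbTE (L_nM xL)) xL. Qed.
Lemma fn_W x : x \in W -> fn x = (D + index (p x) (enum M)).+1.
Proof. by move=> xW; rewrite /fn (negbTE (W_nv xW)) (negbTE (W_nM xW)) (negbTE (W_nL xW)). Qed.

Lemma sizes : (#|M| + #|L| = D /\ D + #|M| + 1 = #|T| /\ 0 < #|L|)%N.
Proof.
have := cML; have := cL; have := D_le; rewrite -!mul2n.
have := nD; rewrite -mul2n; set n := #|T|; lia.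
Qed.

Lemma fn_lt x : (fn x < #|T|)%N.
Proof.
have [s1 [s2 s3]] := sizes.
case: (cls4 x) => [->|xM|xL|xW]; first by rewrite fn_v; lia.
- by rewrite fn_M //; have := idxM xM; lia.
- by rewrite fn_L //; have := idxL xL; lia.
- by rewrite fn_W //; have := idxM (Wpar xW).1; lia.
Qed.

Lemma fn_inj x y : fn x = fn y -> x = y.
Proof.
have [s1 [s2 s3]] := sizes.
have iM a b : a \in M -> b \in M -> index a (enum M) = index b (enum M) -> a = b.
  move=> aM bM E; have := @index_inj _ a (enum M) a b; rewrite !mem_enum; exact.
have iL a b : a \in L -> b \in L -> index a (enum L) = index b (enum L) -> a = b.
  move=> aM bM E; have := @index_inj _ a (enum L) a b; rewrite !mem_enum; exact.
case: (cls4 x) => [->|xM|xL|xW]; case: (cls4 y) => [->|yM|yL|yW] //;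
  rewrite ?fn_v; try rewrite (fn_M xM); try rewrite (fn_M yM); try rewrite (fn_L xL);
  try rewrite (fn_L yL); try rewrite (fn_W xW); try rewrite (fn_W yW);
  try (have := idxM xM); try (have := idxM yM); try (have := idxL xL); try (have := idxL yL);
  try (have := idxM (Wpar xW).1); try (have := idxM (Wpar yW).1); try lia.
- by move=> _ _ [] /(iM _ _ xM yM).
- by move=> _ _ /eq_add_S /addnI /(iL _ _ xL yL).
- move=> _ _ /eq_add_S /addnI /(iM _ _ (Wpar xW).1 (Wpar yW).1) E.
  by rewrite -(Wpar xW).2 -(Wpar yW).2 E.
Qed.

Lemma e_vM y : y \in M -> e v y = true. Proof. by rewrite inM => /andP []. Qed.
Lemma e_vL y : y \in L -> e v y = true. Proof. by rewrite inL => /andP []. Qed.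
Lemma e_vW y : y \in W -> e v y = false. Proof. by rewrite inW => /andP [_ /negbTE]. Qed.

Lemma e_NN x y : e v x -> e v y -> e x y = false.
Proof.
move=> evx evy; apply/negbTE/negP => exy.
have xv : x != v by rewrite eq_sym edge_neq.
have yv : y != v by rewrite eq_sym edge_neq.
case: (par_edge esym eirr econn eacyc v exy) => E.
  by move: yv; rewrite E (nbr_v_par esym eirr econn eacyc evx) eqxx.
by move: xv; rewrite E (nbr_v_par esym eirr econn eacyc evy) eqxx.
Qed.

Lemma e_MW x y : x \in M -> y \in W -> e x y = (index x (enum M) == index (p y) (enum M)).
Proof.
move=> xM yW; have yv := W_nv yW.
have pyM := (Wpar yW).1.
have -> : (index x (enum M) == index (p y) (enum M)) = (x == p y).
  apply/eqP/eqP => [E|->] //.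
  by have := @index_inj _ x (enum M) x (p y); rewrite !mem_enum; apply.
apply/idP/eqP => [exy|->].
  case: (par_edge esym eirr econn eacyc v exy) => // E.
  by move: yv; rewrite E (nbr_v_par esym eirr econn eacyc (e_vM xM)) eqxx.
by rewrite esym; case/andP: (parP esym econn yv).
Qed.

Lemma e_LW x y : x \in L -> y \in W -> e x y = false.
Proof.
move=> xL yW; apply/negbTE/negP => exy; have yv := W_nv yW.
case: (par_edge esym eirr econn eacyc v exy) => E.
  by move: yv; rewrite E (nbr_v_par esym eirr econn eacyc (e_vL xL)) eqxx.
by move: (L_nM xL); rewrite E (Wpar yW).1.
Qed.

Lemma e_WW x y : x \in W -> y \in W -> e x y = false.
Proof.
move=> xW yW; apply/negbTE/negP => exy.
case: (par_edge esym eirr econn eacyc v exy) => E.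
  by move: (W_nM yW); rewrite E (Wpar xW).1.
by move: (W_nM xW); rewrite E (Wpar yW).1.
Qed.

Definition tnd (a b : nat) : bool := [|| (a == 0%N) && (1 <= b <= D)%N, (b == 0%N) && (1 <= a <= D)%N,
      (D < b)%N && (a == b - D)%N | (D < a)%N && (b == a - D)%N].

Lemma key x y : tnd (fn x) (fn y) = e x y.
Proof.
have [s1 [s2 s3]] := sizes.
case: (cls4 x) => [->|xM|xL|xW]; case: (cls4 y) => [->|yM|yL|yW];
  rewrite ?fn_v; try rewrite (fn_M xM); try rewrite (fn_M yM); try rewrite (fn_L xL);
  try rewrite (fn_L yL); try rewrite (fn_W xW); try rewrite (fn_W yW);
  try rewrite eirr;
  try rewrite (e_vM yM); try rewrite (e_vL yL); try rewrite (e_vW yW);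
  try (rewrite esym (e_vM xM)); try (rewrite esym (e_vL xL)); try (rewrite esym (e_vW xW));
  try rewrite (e_MW xM yW); try (rewrite esym (e_MW yM xW));
  try rewrite (e_LW xL yW); try (rewrite esym (e_LW yL xW));
  try rewrite (e_WW xW yW);
  try rewrite (e_NN (e_vM xM) (e_vM yM)); try rewrite (e_NN (e_vM xM) (e_vL yL));
  try rewrite (e_NN (e_vL xL) (e_vM yM)); try rewrite (e_NN (e_vL xL) (e_vL yL));
  try (have := idxM xM); try (have := idxM yM); try (have := idxL xL); try (have := idxL yL);
  try (have := idxM (Wpar xW).1); try (have := idxM (Wpar yW).1); rewrite /tnd; try lia.
Qed.


Lemma cond_iso : isomorphic e (TnD_rel #|T| D).
Proof.
exists (fun x => Ordinal (fn_lt x)); split.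
  apply: inj_card_bij; last by rewrite card_ord.
  by move=> x y /(congr1 val) /= /fn_inj.
by move=> x y; rewrite -key.
Qed.

End Iso.

Lemma fr2_eq : fr D 2 = Num.sqrt (D%:R ^+ 2 + 4) :> R.
Proof. by rewrite /fr natrD natrX. Qed.
Lemma fr1_eq : fr D 1 = Num.sqrt (D%:R ^+ 2 + 1) :> R.
Proof. by rewrite /fr natrD natrX. Qed.
Lemma sq8 : Num.sqrt 8 = 2 * s2 :> R.
Proof. by rewrite -fr22. Qed.

Lemma bnd1_eq : bnd1 = D%:R * Num.sqrt (D%:R ^+ 2 + 4) + Num.sqrt 8 * (#|T|%:R - 2 * D%:R - 1)
       + Num.sqrt 5 * D%:R.
Proof.
have Dl := D_le.
have n1 : (1 <= #|T|)%N by apply/card_gt0P; exists v.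
rewrite /bnd1 natrB; last by rewrite -mul2n; lia.
rewrite -mul2n natrM natrB // -fr2_eq sq8 /beta /cc /kk /qq /s5; ring.
Qed.

Lemma bnd2_eq : (#|T| <= D.*2 + 1)%N ->
  bnd1 + delta D * ((D.*2 + 1 - #|T|)%N)%:R =
  (#|T|%:R - D%:R - 1) * Num.sqrt (D%:R ^+ 2 + 4)
       + (2 * D%:R - #|T|%:R + 1) * Num.sqrt (D%:R ^+ 2 + 1)
       + Num.sqrt 5 * (#|T|%:R - D%:R - 1).
Proof.
move=> nD2; rewrite bnd1_eq natrB // -mul2n natrD natrM -fr2_eq -fr1_eq sq8 /delta /s5; ring.
Qed.

Lemma part1 : is_tree e ->
  bnd1 <= sombor e R /\ (sombor e R = bnd1 <-> is_T_Delta e D).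
Proof.
move=> tr; rewrite SO_dec.
have X0 := Xs_ge0; have d0 := delta_gt R D3; have l0 : 0 <= (ell%:R : R) by rewrite ler0n.
split; first by nra.
rewrite TD_iff //; split.
  move=> E.
  have hX : Xs = 0 by nra.
  have hl : (ell%:R : R) = 0 by nra.
  split; first by apply/Xs_eq0.
  by apply/eqP; rewrite -(eqr_nat R) hl.
by case=> /Xs_eq0 -> ->; rewrite mulr0 !addr0.
Qed.

Lemma part2 : (#|T| <= D.*2)%N ->
  bnd1 + delta D * ((D.*2 + 1 - #|T|)%N)%:R <= sombor e R /\
  (sombor e R = bnd1 + delta D * ((D.*2 + 1 - #|T|)%N)%:R <-> isomorphic e (TnD_rel #|T| D)).
Proof.
move=> nD; rewrite SO_dec.
have X0 := Xs_ge0; have d0 := delta_gt R D3.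
have ll := ell_lb.
set k := (D.*2 + 1 - #|T|)%N in ll *.
have -> : (ell%:R : R) = k%:R + (ell - k)%N%:R by rewrite -natrD subnKC.
have l0 : 0 <= ((ell - k)%N%:R : R) by rewrite ler0n.
split; first by nra.
split.
  move=> E.
  have hX : Xs = 0 by nra.
  have hl : ((ell - k)%N%:R : R) = 0 by nra.
  have H2 := (proj1 Xs_eq0) hX.
  apply: cond_iso => //.
  by move/eqP: hl; rewrite pnatr_eq0 subn_eq0 => hl; apply/eqP; rewrite eqn_leq hl ll.
move=> iso; have [H2 Hl] := iso_cond nD iso.
have -> : Xs = 0 by apply/Xs_eq0.
have -> : (ell - k)%N = 0%N by rewrite Hl /k subnn.
by ring.
Qed.

End Main.

Local Open Scope ring_scope.
Theorem theorem1p1 (R : realType) (T : finType) (e : rel T) (D : nat) :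
  is_tree e ->
  (7 <= #|T|)%N ->
  (3 <= D)%N -> (D <= #|T| - 2)%N ->
  maxdeg e = D ->
  let n := #|T| in
  ((D <= (n - 1)./2)%N ->
     D%:R * Num.sqrt (D%:R ^+ 2 + 4) + Num.sqrt 8 * (n%:R - 2 * D%:R - 1)
       + Num.sqrt 5 * D%:R <= sombor e R
     /\ (sombor e R = D%:R * Num.sqrt (D%:R ^+ 2 + 4)
                      + Num.sqrt 8 * (n%:R - 2 * D%:R - 1) + Num.sqrt 5 * D%:R
         <-> is_T_Delta e D))
  /\
  (((n - 1)./2 < D)%N ->
     (n%:R - D%:R - 1) * Num.sqrt (D%:R ^+ 2 + 4)
       + (2 * D%:R - n%:R + 1) * Num.sqrt (D%:R ^+ 2 + 1)
       + Num.sqrt 5 * (n%:R - D%:R - 1) <= sombor e R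
     /\ (sombor e R = (n%:R - D%:R - 1) * Num.sqrt (D%:R ^+ 2 + 4)
                      + (2 * D%:R - n%:R + 1) * Num.sqrt (D%:R ^+ 2 + 1)
                      + Num.sqrt 5 * (n%:R - D%:R - 1)
         <-> isomorphic e (TnD_rel n D))).
Proof.
move=> tr n7 D3 Dn md n.
have tr' := tr; case: tr' => [[esym eirr] [econn eacyc]].
have n0 : (0 < #|T|)%N by lia.
have [v hv] := bigop.eq_bigmax (fun x => deg e x) n0.
have degv : deg e v = D by rewrite -hv -md.
split => H.
  have [h1 h2] := part1 R esym eirr econn eacyc degv D3 tr.
  by rewrite -(bnd1_eq R eirr degv D3).
have nD : (#|T| <= D.*2)%N by move: H; rewrite ltn_half_double /n; lia.
have nD2 : (#|T| <= D.*2 + 1)%N by lia.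
have [h1 h2] := part2 R esym eirr econn eacyc degv D3 nD.
by rewrite /n -(bnd2_eq R eirr degv D3 nD2).
Qed.
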